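(* Fix positive integers $m_1,m_2,m_3$. Let $A_1$ be an $m_1\times m_1$ coloring matrix, $A_2$ an $m_1\times m_2$ matrix with entries in $\{0,1\}$, and $B=(b_{ij})$ an $m_3\times m_2$ matrix with entries in $\{0,1\}$. Let $$A=\left[\begin{array}{c|c}A_1&A_2\\\hline0&0\end{array}\right],\qquad A'=\left[\begin{array}{c|c|c}A_1&A_2&0\\\hline0&0&0\\\hline0&B&0\end{array}\right],$$ where the $0$'s are zero blocks of the sizes making $A$ an $(m_1+m_2)\times(m_1+m_2)$ matrix and $A'$ an $(m_1+m_2+m_3)\times(m_1+m_2+m_3)$ matrix. Then $$F_{A'}(x)=F_A(x)+x\sum_{i=1}^{m_3}\frac{1}{1-x\sum_{j=1}^{m_2}b_{ij}}.$$ In particular, for $1\le i\le m_1+m_2$ we have $t^{(i)}_{A'}(n)=t^{(i)}_A(n)$ for all $n\ge1$, and for $m_1+m_2<i\le m_1+m_2+m_3$ we have $$t^{(i)}_{A'}(n)=\Big(\sum_{j=1}^{m_2}b_{i-m_1-m_2,j}\Big)^{n-1}$$ for all $n\ge1$.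
   Context: A plane tree is an unlabeled rooted tree in which the children of every vertex are linearly ordered. A coloring matrix is a square matrix $A=(a_{ij})$ with entries in $\{0,1\}$. An $A$-coloring of a plane tree assigns to each vertex a color (an index of a row of $A$) such that whenever a vertex of color $j$ is a child of a vertex of color $i$, $a_{ij}=1$. Let $t_A(n)$ be the number of pairs (plane tree with $n$ vertices, $A$-coloring of it), $t_A^{(i)}(n)$ the number of those with root color $i$, and $F_A(x)=\sum_{n\ge1}t_A(n)x^n$. *)

(* Defs.v *)
From HB Require Import structures.
From mathcomp Require Import all_boot all_order all_algebra.
From mathcomp Require Import finmap.
From mathcomp Require Import boolp classical_sets cardinality.
Set Implicit Arguments.
Unset Strict Implicit.
Unset Printing Implicit Defensive.
Local Open Scope classical_set_scope.

(* A colored plane tree: [GenTree.Node c ts] is a vertex of color c (a 0-based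
   row index of the coloring matrix) whose ordered list of children is ts.
   Leaves of GenTree are never used (they are not valid). A pair
   (plane tree, coloring) is the same thing as such a labelled tree. *)
Definition ctree := GenTree.tree void.

(* entry a_{c d} of A (false if an index is out of range) *)
Definition adj (m : nat) (A : 'M[bool]_m) (c d : nat) : bool :=
  match @insub nat (fun k => k < m) _ c, @insub nat (fun k => k < m) _ d with
  | Some i, Some j => A i j
  | _, _ => false
  end.

Definition root_color (t : ctree) : nat :=
  match t with GenTree.Node c _ => c | GenTree.Leaf _ => 0 end.

Fixpoint tsize (t : ctree) : nat :=
  match t with
  | GenTree.Leaf _ => 1
  | GenTree.Node _ ts => (sumn (map tsize ts)).+1
  end.

Fixpoint valid (m : nat) (A : 'M[bool]_m) (t : ctree) : bool :=
  match t with
  | GenTree.Leaf _ => false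
  | GenTree.Node c ts =>
      [&& c < m, all (fun u => adj A c (root_color u)) ts & all (valid A) ts]
  end.

Definition tA (m : nat) (A : 'M[bool]_m) (n : nat) : nat :=
  #|` fset_set [set t : ctree | valid A t /\ tsize t = n] |%fset.

(* t_A^{(i)}(n), with 0-based color index i *)
Definition tAi (m : nat) (A : 'M[bool]_m) (i n : nat) : nat :=
  #|` fset_set [set t : ctree | valid A t /\ tsize t = n /\ root_color t = i] |%fset.

Definition zmx {m n : nat} : 'M[bool]_(m, n) := const_mx false.

Definition blockA (m1 m2 : nat) (A1 : 'M[bool]_m1) (A2 : 'M[bool]_(m1, m2))
  : 'M[bool]_(m1 + m2) := block_mx A1 A2 zmx zmx.

Definition blockA' (m1 m2 m3 : nat) (A1 : 'M[bool]_m1) (A2 : 'M[bool]_(m1, m2))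
  (B : 'M[bool]_(m3, m2)) : 'M[bool]_(m1 + m2 + m3) :=
  block_mx (blockA A1 A2) zmx (row_mx zmx B) zmx.

(* Main.v *)
Require Import Defs.
From HB Require Import structures.
From mathcomp Require Import all_boot all_order all_algebra.
From mathcomp Require Import finmap.
From mathcomp Require Import boolp classical_sets cardinality.
Set Implicit Arguments.
Unset Strict Implicit.
Unset Printing Implicit Defensive.

Section Helpers.
Local Open Scope classical_set_scope.

Lemma ctree_ind' (P : ctree -> Prop) :
  (forall c ts, (forall u, u \in ts -> P u) -> P (GenTree.Node c ts)) ->
  forall t, P t.
Proof.
move=> H; elim/GenTree.tree_ind => [[]|c ts IH]; apply: H.
elim: ts IH => //= u ts IHts [Pu Pts] v; rewrite inE => /orP[/eqP->//|].
exact: IHts.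
Qed.

Lemma adj_nat m (A : 'M[bool]_m) c d (hc : c < m) (hd : d < m) :
  adj A c d = A (Ordinal hc) (Ordinal hd).
Proof. rewrite /adj; case: insubP => [i _ ei|]; last by rewrite hc. case: insubP => [j _ ej|]; last by rewrite hd. by congr (A _ _); apply: val_inj. Qed.

Lemma adj_bound m (A : 'M[bool]_m) c d : adj A c d -> (c < m) && (d < m).
Proof.
rewrite /adj; case: insubP => [i -> _|//]; case: insubP => [j -> _|//] //.
Qed.

Lemma lshift_ord p q c (h : c < p + q) (h' : c < p) :
  Ordinal h = lshift q (Ordinal h').
Proof. exact: val_inj. Qed.
Lemma rshift_ord p q c (h : p + c < p + q) (h' : c < q) :
  Ordinal h = rshift p (Ordinal h').
Proof. exact: val_inj. Qed.


Section Blk.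
Variables (m1 m2 m3 : nat) (A1 : 'M[bool]_m1) (A2 : 'M[bool]_(m1, m2))
  (B : 'M[bool]_(m3, m2)).
Local Notation A := (blockA A1 A2).
Local Notation A' := (blockA' A1 A2 B).

Lemma adjA'_lo c d : c < m1 + m2 -> adj A' c d = adj A c d.
Proof.
move=> hc; have hc1 : c < m1 + m2 + m3 by apply: ltn_addr.
case: (ltnP d (m1 + m2)) => hd.
  have hd1 : d < m1 + m2 + m3 by apply: ltn_addr.
  by rewrite (adj_nat A' hc1 hd1) (adj_nat A hc hd) (lshift_ord hc1 hc)
    (lshift_ord hd1 hd) /blockA' block_mxEul.
have -> : adj A c d = false.
  by apply/negP => /adj_bound/andP[_]; rewrite ltnNge hd.
case: (ltnP d (m1 + m2 + m3)) => hd1; last first.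
  by apply/negP => /adj_bound/andP[_]; rewrite ltnNge hd1.
have he : d - (m1 + m2) < m3 by rewrite ltn_subLR.
have hd2 : (m1 + m2) + (d - (m1 + m2)) < m1 + m2 + m3 by rewrite subnKC.
rewrite (adj_nat A' hc1 hd1).
have -> : Ordinal hd1 = Ordinal hd2 by apply: val_inj; rewrite /= subnKC.
by rewrite (lshift_ord hc1 hc) (rshift_ord hd2 he) /blockA' block_mxEur mxE.
Qed.

Lemma adjA_mid c d : m1 <= c -> adj A c d = false.
Proof.
move=> hc; apply/negP => hadj; move: (hadj) => /adj_bound/andP[hc1 hd1].
have he : c - m1 < m2 by rewrite ltn_subLR.
have hc2 : m1 + (c - m1) < m1 + m2 by rewrite subnKC.
move: hadj; rewrite (adj_nat A hc1 hd1).
have -> : Ordinal hc1 = Ordinal hc2 by apply: val_inj; rewrite /= subnKC.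
rewrite (rshift_ord hc2 he) /blockA.
case: (ltnP d m1) => hd.
  by rewrite (lshift_ord hd1 hd) block_mxEdl mxE.
have hf : d - m1 < m2 by rewrite ltn_subLR.
have hd2 : m1 + (d - m1) < m1 + m2 by rewrite subnKC.
have -> : Ordinal hd1 = Ordinal hd2 by apply: val_inj; rewrite /= subnKC.
by rewrite (rshift_ord hd2 hf) block_mxEdr mxE.
Qed.

Lemma adjA'_hi (k : 'I_m3) d : adj A' (m1 + m2 + k) d ->
  exists j : 'I_m2, d = m1 + j /\ B k j.
Proof.
move=> hadj; move: (hadj) => /adj_bound/andP[hc1 hd1].
move: hadj; rewrite (adj_nat A' hc1 hd1).
have -> : Ordinal hc1 = rshift (m1 + m2) k by apply: val_inj.
case: (ltnP d (m1 + m2)) => hd; last first.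
  have he : d - (m1 + m2) < m3 by rewrite ltn_subLR.
  have hd2 : (m1 + m2) + (d - (m1 + m2)) < m1 + m2 + m3 by rewrite subnKC.
  have -> : Ordinal hd1 = Ordinal hd2 by apply: val_inj; rewrite /= subnKC.
  by rewrite (rshift_ord hd2 he) /blockA' block_mxEdr mxE.
rewrite (lshift_ord hd1 hd) /blockA' block_mxEdl.
case: (ltnP d m1) => hd3.
  by rewrite (lshift_ord hd hd3) row_mxEl mxE.
have hf : d - m1 < m2 by rewrite ltn_subLR.
have hd2 : m1 + (d - m1) < m1 + m2 by rewrite subnKC.
have -> : Ordinal hd = Ordinal hd2 by apply: val_inj; rewrite /= subnKC.
rewrite (rshift_ord hd2 hf) row_mxEr => hB.
by exists (Ordinal hf); rewrite /= subnKC.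
Qed.

Lemma adjA'_hiE (k : 'I_m3) (j : 'I_m2) : adj A' (m1 + m2 + k) (m1 + j) = B k j.
Proof.
have hc2 : (m1 + m2) + k < m1 + m2 + m3 by rewrite ltn_add2l.
have hj : m1 + j < m1 + m2 by rewrite ltn_add2l.
have hd1 : m1 + j < m1 + m2 + m3 by apply: ltn_addr.
rewrite (adj_nat A' hc2 hd1).
have -> : Ordinal hc2 = rshift (m1 + m2) k by apply: val_inj.
rewrite (lshift_ord hd1 hj) /blockA' block_mxEdl.
have -> : Ordinal hj = rshift m1 j by apply: val_inj.
by rewrite row_mxEr.
Qed.
End Blk.


Lemma valid_root m (A : 'M[bool]_m) t : valid A t -> root_color t < m.
Proof. by case: t => [[]|c ts] /= /and3P[]. Qed.

Section Trees.
Variables (m1 m2 m3 : nat) (A1 : 'M[bool]_m1) (A2 : 'M[bool]_(m1, m2))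
  (B : 'M[bool]_(m3, m2)).
Local Notation A := (blockA A1 A2).
Local Notation A' := (blockA' A1 A2 B).

Lemma validA'_lo t : root_color t < m1 + m2 -> valid A' t = valid A t.
Proof.
elim/ctree_ind': t => c ts IH /= hc.
rewrite hc (ltn_addr _ hc) /=.
rewrite (eq_all (a2 := fun u => adj A c (root_color u))); last first.
  by move=> u /=; rewrite adjA'_lo.
case hall: (all _ ts) => //=.
apply: eq_in_all => u hu; apply: IH => //.
by move/allP: hall => /(_ u hu) /adj_bound /andP[].
Qed.

Lemma validA_A' t : valid A t -> valid A' t.
Proof. by move=> h; rewrite validA'_lo ?h // (valid_root h). Qed.

Lemma child_hi (k : 'I_m3) u : valid A' u -> adj A' (m1 + m2 + k) (root_color u) ->
  exists j : 'I_m2, B k j /\ u = GenTree.Node (m1 + j) [::].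
Proof.
case: u => [[]|d us] /= /and3P[hd hall _] /adjA'_hi [j [ej hB]].
exists j; split => //; rewrite ej; congr GenTree.Node.
case: us hall => // v us /= /andP[].
by rewrite ej adjA'_lo ?adjA_mid ?leq_addr // ltn_add2l.
Qed.

End Trees.


Section Star.
Variables (m1 m2 m3 : nat) (A1 : 'M[bool]_m1) (A2 : 'M[bool]_(m1, m2))
  (B : 'M[bool]_(m3, m2)).
Local Notation A := (blockA A1 A2).
Local Notation A' := (blockA' A1 A2 B).

Definition star (k : nat) p (f : {ffun 'I_p -> 'I_m2}) : ctree :=
  GenTree.Node (m1 + m2 + k) [seq GenTree.Node (m1 + f i) [::] | i <- enum 'I_p].

Lemma star_inj k p : injective (@star k p).
Proof.
move=> f g [] /eq_in_map H; apply/ffunP => i.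
have := H i; rewrite mem_enum => /(_ isT) [] /eqP; rewrite eqn_add2l => /eqP.
exact: val_inj.
Qed.

Lemma starF (hm2 : 0 < m2) (k : 'I_m3) n : 0 < n ->
  [set t | valid A' t /\ Defs.tsize t = n /\ root_color t = m1 + m2 + k] =
  @star k n.-1 @` [set f | f \in ffun_on (B k)].
Proof.
move=> hn; apply/seteqP; split => t /=.
  case: t => [[]|c ts] /= [/and3P[hc hall hval] [hs ec]].
  subst c.
  have hch : forall u, u \in ts -> exists j : 'I_m2, B k j /\ u = GenTree.Node (m1 + j) [::].
    move=> u hu; apply: child_hi.
      by move/allP: hval; apply.
    by move/allP: hall; apply.
  have hsz : size ts = n.-1.
    rewrite -hs /= -[size ts]sum1_size sumnE big_map; apply: eq_big_seq => u hu.
    by have [j [_ ->]] := hch u hu.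
  pose g (u : ctree) : 'I_m2 := insubd (Ordinal hm2) (root_color u - m1).
  exists [ffun i : 'I_n.-1 => g (nth (GenTree.Node 0 [::]) ts i)].
    apply/ffun_onP => i; rewrite ffunE.
    have hi : i < size ts by rewrite hsz.
    have [j [hB ->]] := hch _ (mem_nth (GenTree.Node 0 [::]) hi).
    suff -> : g (GenTree.Node (m1 + j) [::]) = j by [].
    apply: val_inj; rewrite /g /= addKn insubdK //; exact: ltn_ord.
  rewrite /star; apply: f_equal.
  apply: (@eq_from_nth _ (GenTree.Node 0 [::])); first by rewrite size_map size_enum_ord hsz.
  move=> i; rewrite size_map size_enum_ord => hi.
  rewrite (nth_map (Ordinal hi)) ?size_enum_ord // ffunE.
  have -> : nth (Ordinal hi) (enum 'I_n.-1) i = Ordinal hi.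
    by apply: val_inj; rewrite /= nth_enum_ord.
  have hi' : i < size ts by rewrite hsz.
  have [j [hB ->]] := hch _ (mem_nth (GenTree.Node 0 [::]) hi').
  suff -> : g (GenTree.Node (m1 + j) [::]) = j by [].
  apply: val_inj; rewrite /g /= addKn insubdK //; exact: ltn_ord.
case=> f /ffun_onP hf <-; rewrite /star /=; split; last split => //.
- apply/and3P; split.
  + by rewrite ltn_add2l.
  + apply/allP => u /mapP [i _ ->] /=; rewrite adjA'_hiE; exact: hf.
  + apply/allP => u /mapP [i _ ->] /=.
    by rewrite andbT ltn_addr // ltn_add2l.
- rewrite sumnE !big_map (eq_bigr (fun _ => 1)) // sum1_size -enumT size_enum_ord.
  by rewrite prednK.
Qed.

Lemma card_starF (hm2 : 0 < m2) (k : 'I_m3) n : 0 < n ->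
  tAi A' (m1 + m2 + k) n = (\sum_(j < m2) (B k j : nat)) ^ n.-1.
Proof.
move=> hn; rewrite /tAi (starF hm2 k hn).
have -> : fset_set (@star k n.-1 @` [set f | f \in ffun_on (B k)]) =
   [fset @star k n.-1 f | f in ffun_on (B k)]%fset.
  apply/fsetP => t; rewrite in_fset_set; last exact: finite_image.
  apply/idP/imfsetP => [|[f hf ->]].
    by rewrite inE => -[f hf <-]; exists f.
  by rewrite inE; exists f.
rewrite card_imfset; last exact: star_inj.
rewrite -(card_uniqP (enum_finmem_uniq (mem (ffun_on (B k))))).
rewrite (eq_card (enum_finmemE (mem (ffun_on (B k))))).
rewrite card_ffun_on card_ord; congr (_ ^ _).
rewrite -sum1_card big_mkcond /=; apply: eq_bigr => j _.
have -> : (j \in B k) = B k j by []. by case: (B k j).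
Qed.
End Star.


Section Fin.
Variables (m : nat) (A : 'M[bool]_m).

Definition okc (x : nat + void) := if x is inl k then k <= m else false.

Lemma enc_prop t : valid A t ->
  size (GenTree.encode t) = 2 * Defs.tsize t /\ all okc (GenTree.encode t).
Proof.
elim/ctree_ind': t => c ts IH /= /and3P[hc _ hv].
have IH' : forall u, u \in ts -> size (GenTree.encode u) = 2 * Defs.tsize u /\ all okc (GenTree.encode u).
  by move=> u hu; apply: IH => //; move/allP: hv; apply.
split.
  rewrite size_rcons size_flatten /shape -map_comp.
  rewrite mulnS; congr (_.+2).
  rewrite !sumnE !big_map big_distrr /=; apply: eq_big_seq => u hu.
  by have [-> _] := IH' u hu.
rewrite /= hc all_rcons /=.
apply/allP => x /flattenP [s /mapP [u hu ->] hx].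
by have [_ /allP] := IH' u hu; apply.
Qed.

Definition Wset N := [set s : seq (nat + void) | size s = N /\ all okc s].

Lemma finite_W N : finite_set (Wset N).
Proof.
elim: N => [|N IH].
  apply: (@sub_finite_set _ _ [set` [:: [::]]]); last exact: finite_seq.
  by move=> s [/size0nil -> _] /=; rewrite inE.
apply: (@sub_finite_set _ _ ((fun p => p.1 :: p.2) @`
   ([set` [seq inl k | k <- iota 0 m.+1]] `*` Wset N))); last first.
  by apply: finite_image; apply: finite_setX => //; exact: finite_seq.
case=> [|x s] [//= [hs] /andP[hx hall]].
exists (x, s) => //; split => //=.
case: x hx => [k hk|[]] /=.
rewrite -[inl 0 :: _]/(map inl (iota 0 m.+1)). by apply/mapP; exists k => //; rewrite mem_iota add0n ltnS.
Qed.

Lemma finite_valid n : finite_set [set t : ctree | valid A t /\ Defs.tsize t = n].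
Proof.
apply: (@sub_finite_set _ _ ((fun s => odflt (GenTree.Node 0 [::]) (GenTree.decode s)) @` Wset (2 * n))); last first.
  exact/finite_image/finite_W.
move=> t [hv hs]; exists (GenTree.encode t).
  by have [h1 h2] := enc_prop hv; split => //; rewrite h1 hs.
by rewrite /= GenTree.codeK.
Qed.
End Fin.


Section Main.

Lemma set0_size0 m (A : 'M[bool]_m) :
  [set t : ctree | valid A t /\ Defs.tsize t = 0] = set0.
Proof. by apply/seteqP; split => // -[[]|c ts] [_]. Qed.

Lemma tAi_lo m1 m2 m3 (A1 : 'M[bool]_m1) (A2 : 'M[bool]_(m1, m2))
  (B : 'M[bool]_(m3, m2)) i n : i < m1 + m2 ->
  tAi (blockA' A1 A2 B) i n = tAi (blockA A1 A2) i n.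
Proof.
move=> hi; rewrite /tAi; congr (#|` fset_set _|)%fset.
apply/seteqP; split => t [hv [hs hr]]; split => //;
  by rewrite ?validA'_lo in hv * => //; rewrite hr.
Qed.

Lemma tA_split m1 m2 m3 (hm2 : 0 < m2) (A1 : 'M[bool]_m1) (A2 : 'M[bool]_(m1, m2))
  (B : 'M[bool]_(m3, m2)) n : 0 < n ->
  tA (blockA' A1 A2 B) n = tA (blockA A1 A2) n +
     \sum_(k < m3) (\sum_(j < m2) (B k j : nat)) ^ n.-1.
Proof.
move=> hn.
set A := blockA A1 A2; set A' := blockA' A1 A2 B.
pose F (k : nat) := [set t : ctree | valid A' t /\ Defs.tsize t = n /\ root_color t = m1 + m2 + k].
have finS := finite_valid A n.
have finS' := finite_valid A' n.
have finF : forall k, finite_set (F k).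
  by move=> k; apply: sub_finite_set finS' => t [? []].
have triv : trivIset [set: nat] F.
  move=> i j _ _ [t [[_ [_ hi]] [_ [_ hj]]]].
  by apply/eqP; rewrite -(eqn_add2l (m1 + m2)) -hi -hj.
have finU : finite_set (\big[setU/set0]_(k < m3) F k).
  by rewrite -bigcup_mkord; apply: bigcup_finite => // ; exact: finite_II.
have ES : [set t : ctree | valid A' t /\ Defs.tsize t = n] =
    [set t : ctree | valid A t /\ Defs.tsize t = n] `|` \big[setU/set0]_(k < m3) F k.
  rewrite -bigcup_mkord; apply/seteqP; split => t.
    move=> [hv hs]; case: (ltnP (root_color t) (m1 + m2)) => hr.
      by left; split => //; rewrite -(validA'_lo A1 A2 B).
    right; exists (root_color t - (m1 + m2)).
      by rewrite /= ltn_subLR // (valid_root hv).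
    by split => //; split => //; rewrite subnKC.
  case=> [[hv hs]|[k _ [hv [hs _]]]]; split => //.
  exact: validA_A'.
rewrite /tA ES fset_setU // cardfsU.
have -> : (fset_set [set t : ctree | valid A t /\ Defs.tsize t = n] `&`
            fset_set (\big[setU/set0]_(k < m3) F k))%fset = fset0.
  rewrite -fset_setI // -[RHS]fset_set0; congr fset_set.
  rewrite -bigcup_mkord; apply/seteqP; split => // t [[hv _] [k _ [_ [_ hr]]]].
  have := valid_root hv; rewrite hr.
  by rewrite ltnNge leq_addr.
rewrite cardfs0 subn0; congr (_ + _).
rewrite -(@trivIset_sum_card _ F m3 finF triv).
apply: eq_bigr => k _.
by rewrite -(card_starF A1 A2 B hm2 k hn).
Qed.
End Main.

End Helpers.

(* The generating-function identity
     F_{A'}(x) = F_A(x) + x * sum_{i<m3} 1/(1 - x * sum_j b_ij)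
   is stated coefficientwise (coefficient of x^n, n >= 1; both sides have
   zero constant term), using x/(1 - d x) = sum_{n>=1} d^(n-1) x^n. *)
Theorem theorem31 (m1 m2 m3 : nat) (hm1 : 0 < m1) (hm2 : 0 < m2) (hm3 : 0 < m3)
  (A1 : 'M[bool]_m1) (A2 : 'M[bool]_(m1, m2)) (B : 'M[bool]_(m3, m2)) :
  let A := blockA A1 A2 in
  let A' := blockA' A1 A2 B in
  [/\ tA A' 0 = tA A 0,
      (forall n, 0 < n ->
         tA A' n = tA A n + \sum_(k < m3) (\sum_(j < m2) (B k j : nat)) ^ n.-1),
      (forall i n, i < m1 + m2 -> 0 < n -> tAi A' i n = tAi A i n) &
      (forall k : 'I_m3, forall n, 0 < n ->
         tAi A' (m1 + m2 + k) n = (\sum_(j < m2) (B k j : nat)) ^ n.-1)].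
Proof.
move=> A A'; split.
- by rewrite /tA !set0_size0.
- by move=> n hn; apply: tA_split.
- by move=> i n hi _; apply: tAi_lo.
- by move=> k n hn; apply: card_starF.
Qed.
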